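(* Let $X$ be a Hausdorff complex topological vector space with $\dim X>1$, and let $\Gamma$ be an SOT-dense subset of $\mathcal{B}(X)$. Then there exists $\Gamma_1\subset\Gamma$ such that $\Gamma_1$ is SOT-dense in $\mathcal{B}(X)$ and $\Gamma_1$ is not strictly transitive.
   Context: $\mathcal{B}(X)$ denotes the space of continuous linear operators on $X$. A set $\Gamma\subset\mathcal{B}(X)$ is strictly transitive if for each pair of nonzero $x,y\in X$ there exist $\alpha\in\mathbb{C}$ and $T\in\Gamma$ with $\alpha Tx=y$. The strong operator topology (SOT) on $\mathcal{B}(X)$ is the topology in which $T$ has a neighborhood basis of sets $\{S\in\mathcal{B}(X): Se_i-Te_i\in U,\ i=1,\dots,k\}$, where $k\in\mathbb{N}$, $e_1,\dots,e_k\in X$ are linearly independent, and $U$ is a neighborhood of $0$ in $X$. *)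

(* Defs.v *)
From Stdlib Require Import Reals.
Open Scope R_scope.

Record Cplx := mkC { Cre : R; Cim : R }.
Definition C0 : Cplx := mkC 0 0.
Definition C1 : Cplx := mkC 1 0.
Definition Cadd (a b : Cplx) : Cplx := mkC (Cre a + Cre b) (Cim a + Cim b).
Definition Copp (a : Cplx) : Cplx := mkC (- Cre a) (- Cim a).
Definition Cmul (a b : Cplx) : Cplx :=
  mkC (Cre a * Cre b - Cim a * Cim b) (Cre a * Cim b + Cim a * Cre b).
(** squared modulus; the Euclidean topology on C is given by balls *)
Definition Cnorm2 (a : Cplx) : R := Cre a * Cre a + Cim a * Cim a.
Definition Cdist_lt (a b : Cplx) (eps : R) : Prop :=
  Cnorm2 (Cadd a (Copp b)) < eps * eps.

Record CTVS := {
  vec :> Type;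
  vadd : vec -> vec -> vec;
  vzero : vec;
  vopp : vec -> vec;
  vscal : Cplx -> vec -> vec;
  vadd_assoc : forall x y z, vadd x (vadd y z) = vadd (vadd x y) z;
  vadd_comm : forall x y, vadd x y = vadd y x;
  vadd_0 : forall x, vadd x vzero = x;
  vadd_opp : forall x, vadd x (vopp x) = vzero;
  vscal_1 : forall x, vscal C1 x = x;
  vscal_mul : forall a b x, vscal a (vscal b x) = vscal (Cmul a b) x;
  vscal_addv : forall a x y, vscal a (vadd x y) = vadd (vscal a x) (vscal a y);
  vscal_addC : forall a b x, vscal (Cadd a b) x = vadd (vscal a x) (vscal b x);
  is_open : (vec -> Prop) -> Prop;
  open_full : is_open (fun _ => True);
  open_inter : forall U V, is_open U -> is_open V -> is_open (fun x => U x /\ V x);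
  open_union : forall (F : (vec -> Prop) -> Prop),
      (forall U, F U -> is_open U) -> is_open (fun x => exists U, F U /\ U x);
  vadd_cont : forall x y W, is_open W -> W (vadd x y) ->
      exists U V, is_open U /\ is_open V /\ U x /\ V y /\
        (forall u v, U u -> V v -> W (vadd u v));
  vscal_cont : forall a x W, is_open W -> W (vscal a x) ->
      exists eps U, eps > 0 /\ is_open U /\ U x /\
        (forall b u, Cdist_lt b a eps -> U u -> W (vscal b u))
}.

Arguments vadd {_}. Arguments vzero {_}. Arguments vopp {_}.
Arguments vscal {_}. Arguments is_open {_}.

Definition vsub {X : CTVS} (x y : X) : X := vadd x (vopp y).

Definition Hausdorff (X : CTVS) : Prop :=
  forall x y : X, x <> y -> exists U V, is_open U /\ is_open V /\ U x /\ V y /\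
    (forall z, U z -> V z -> False).

Definition nbhd {X : CTVS} (x : X) (N : X -> Prop) : Prop :=
  exists U, is_open U /\ U x /\ (forall z, U z -> N z).

Fixpoint lin_comb {X : CTVS} (c : nat -> Cplx) (e : nat -> X) (k : nat) : X :=
  match k with
  | O => vzero
  | S k' => vadd (lin_comb c e k') (vscal (c k') (e k'))
  end.

Definition lin_indep {X : CTVS} (e : nat -> X) (k : nat) : Prop :=
  forall c : nat -> Cplx, lin_comb c e k = vzero -> forall i, (i < k)%nat -> c i = C0.

Definition dim_gt1 (X : CTVS) : Prop :=
  exists x y : X, lin_indep (fun i => match i with O => x | _ => y end) 2.

(** B(X): continuous linear operators on X *)
Definition is_bounded_op {X : CTVS} (T : X -> X) : Prop :=
  (forall x y, T (vadd x y) = vadd (T x) (T y)) /\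
  (forall a x, T (vscal a x) = vscal a (T x)) /\
  (forall W, is_open W -> is_open (fun x => W (T x))).

Definition SOT_dense {X : CTVS} (G : (X -> X) -> Prop) : Prop :=
  forall T : X -> X, is_bounded_op T ->
  forall (k : nat) (e : nat -> X), lin_indep e k ->
  forall U : X -> Prop, nbhd vzero U ->
  exists S, G S /\ forall i, (i < k)%nat -> U (vsub (S (e i)) (T (e i))).

Definition strictly_transitive {X : CTVS} (G : (X -> X) -> Prop) : Prop :=
  forall x y : X, x <> vzero -> y <> vzero ->
  exists (a : Cplx) (T : X -> X), G T /\ vscal a (T x) = y.

(* Main.v *)
Require Import Defs.
From Stdlib Require Import Reals Lra Lia Classical FunctionalExtensionality PropExtensionality.
Open Scope R_scope.

Lemma Cext (a b : Cplx) : Cre a = Cre b -> Cim a = Cim b -> a = b.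
Proof. destruct a, b; simpl; intros; subst; reflexivity. Qed.

Lemma add0l {X : CTVS} (x : X) : vadd vzero x = x.
Proof. rewrite vadd_comm; apply vadd_0. Qed.
Lemma addNl {X : CTVS} (x : X) : vadd (vopp x) x = vzero.
Proof. rewrite vadd_comm; apply vadd_opp. Qed.
Lemma add_cancel_r {X : CTVS} (a b c : X) : vadd a c = vadd b c -> a = b.
Proof.
  intros H.
  transitivity (vadd (vadd a c) (vopp c)).
  - rewrite <- vadd_assoc, vadd_opp, vadd_0; reflexivity.
  - rewrite H, <- vadd_assoc, vadd_opp, vadd_0; reflexivity.
Qed.
Lemma inv_unique {X : CTVS} (u v : X) : vadd u v = vzero -> v = vopp u.
Proof.
  intros H. rewrite <- (add0l v), <- (addNl u), <- vadd_assoc, H, vadd_0; reflexivity.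
Qed.
Lemma vscal0 {X : CTVS} (x : X) : vscal Defs.C0 x = vzero.
Proof.
  assert (H : vadd (vscal Defs.C0 x) (vscal Defs.C0 x) = vadd vzero (vscal Defs.C0 x)).
  { rewrite <- vscal_addC, add0l; f_equal; apply Cext; simpl; ring. }
  exact (add_cancel_r _ _ _ H).
Qed.
Lemma vscal_zero {X : CTVS} (a : Cplx) : vscal a (@vzero X) = vzero.
Proof.
  assert (H : vadd (vscal a (@vzero X)) (vscal a vzero) = vadd vzero (vscal a vzero)).
  { rewrite <- vscal_addv, !add0l; reflexivity. }
  exact (add_cancel_r _ _ _ H).
Qed.
Lemma vscal_opp {X : CTVS} (a : Cplx) (x : X) : vscal (Copp a) x = vopp (vscal a x).
Proof.
  apply inv_unique. rewrite <- vscal_addC.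
  replace (Cadd a (Copp a)) with Defs.C0 by (apply Cext; simpl; ring). apply vscal0.
Qed.
Lemma vopp_m1 {X : CTVS} (v : X) : vopp v = vscal (Copp Defs.C1) v.
Proof. rewrite vscal_opp, vscal_1; reflexivity. Qed.
Lemma subK {X : CTVS} (a b : X) : vadd (vsub a b) b = a.
Proof. unfold vsub; rewrite <- vadd_assoc, addNl, vadd_0; reflexivity. Qed.
Lemma sub_split {X : CTVS} (a b c : X) : vsub a b = vadd (vsub a c) (vsub c b).
Proof.
  unfold vsub. rewrite <- vadd_assoc. f_equal.
  rewrite vadd_assoc, addNl, add0l; reflexivity.
Qed.
Lemma addK' {X : CTVS} (a b : X) : vsub (vadd a b) a = b.
Proof. unfold vsub. rewrite (vadd_comm _ a b), <- vadd_assoc, vadd_opp, vadd_0; reflexivity. Qed.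
Lemma subrr {X : CTVS} (a : X) : vsub a a = vzero.
Proof. apply vadd_opp. Qed.

Lemma op0 {X : CTVS} (T : X -> X) : is_bounded_op T -> T vzero = vzero.
Proof.
  intros [Ha _]. apply (add_cancel_r _ _ (T vzero)).
  rewrite <- Ha, vadd_0, add0l; reflexivity.
Qed.
Lemma op_lin_comb {X : CTVS} (T : X -> X) c e k : is_bounded_op T ->
  T (lin_comb c e k) = lin_comb c (fun i => T (e i)) k.
Proof.
  intros HT. induction k; simpl.
  - apply op0; auto.
  - destruct HT as [Ha [Hs _]]. rewrite Ha, Hs, IHk; reflexivity.
Qed.
Lemma vscal_lin_comb {X : CTVS} a c (e : nat -> X) k :
  vscal a (lin_comb c e k) = lin_comb (fun i => Cmul a (c i)) e k.
Proof.
  induction k; simpl.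
  - apply vscal_zero.
  - rewrite vscal_addv, IHk, vscal_mul; reflexivity.
Qed.
Lemma lin_comb_ext {X : CTVS} c (f g : nat -> X) k :
  (forall i, (i < k)%nat -> f i = g i) -> lin_comb c f k = lin_comb c g k.
Proof.
  induction k; simpl; intros H; auto.
  rewrite IHk by (intros; apply H; lia). rewrite H by lia. reflexivity.
Qed.

Definition Cinv (a : Cplx) : Cplx :=
  mkC (Cre a / Cnorm2 a) (- Cim a / Cnorm2 a).
Lemma Cnorm2_pos (a : Cplx) : a <> Defs.C0 -> 0 < Cnorm2 a.
Proof.
  intros H. unfold Cnorm2.
  destruct (Req_dec (Cre a) 0) as [H1|H1]; destruct (Req_dec (Cim a) 0) as [H2|H2].
  - exfalso; apply H; apply Cext; simpl; auto.
  - rewrite H1. assert (0 < Cim a * Cim a) by (apply Rsqr_pos_lt; auto). unfold Rsqr in *; lra.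
  - assert (0 < Cre a * Cre a) by (apply Rsqr_pos_lt; auto). unfold Rsqr in *; nra.
  - assert (0 < Cre a * Cre a) by (apply Rsqr_pos_lt; auto). unfold Rsqr in *; nra.
Qed.
Lemma Cinv_l (a : Cplx) : 0 < Cnorm2 a -> Cmul (Cinv a) a = Defs.C1.
Proof.
  intros H. unfold Cinv, Cmul, Defs.C1; apply Cext; simpl; unfold Cnorm2 in *; field; lra.
Qed.

Lemma open_local {X : CTVS} (S : X -> Prop) :
  (forall x, S x -> exists V, is_open V /\ V x /\ forall z, V z -> S z) -> is_open S.
Proof.
  intros H.
  assert (E : S = (fun x => exists U, (is_open U /\ forall z, U z -> S z) /\ U x)).
  { apply functional_extensionality; intros x; apply propositional_extensionality; split.
    - intros Hx. destruct (H x Hx) as [V [HV1 [HV2 HV3]]]. exists V; auto.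
    - intros [U [[_ HU] Ux]]; auto. }
  rewrite E. apply open_union. intros U [HU _]; exact HU.
Qed.

Lemma fin_nbhd {X : CTVS} (p : X) k (Rl : nat -> X -> Prop) :
  (forall i, (i < k)%nat -> exists V, is_open V /\ V p /\ forall z, V z -> Rl i z) ->
  exists V, is_open V /\ V p /\ forall z, V z -> forall i, (i < k)%nat -> Rl i z.
Proof.
  induction k; intros H.
  - exists (fun _ => True). split; [apply open_full|]. split; auto. intros; lia.
  - destruct IHk as [V [HV1 [HV2 HV3]]]. { intros; apply H; lia. }
    destruct (H k ltac:(lia)) as [W [HW1 [HW2 HW3]]].
    exists (fun x => V x /\ W x). split; [apply open_inter; auto|]. split; auto.
    intros z [Vz Wz] i Hi. destruct (Nat.eq_dec i k) as [->|Hne]; auto.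
    apply HV3; auto; lia.
Qed.

Lemma Cdist_mono (a b : Cplx) e1 e2 : Cdist_lt b a e1 -> 0 < e1 <= e2 -> Cdist_lt b a e2.
Proof. unfold Cdist_lt. intros. nra. Qed.

Lemma Cdist_refl (a : Cplx) e : 0 < e -> Cdist_lt a a e.
Proof. unfold Cdist_lt, Cnorm2, Cadd, Copp; simpl. intros. nra. Qed.

Lemma fin_eps k (Q : nat -> Cplx -> Prop) :
  (forall i, (i < k)%nat -> exists eps, eps > 0 /\ forall b, Cdist_lt b Defs.C0 eps -> Q i b) ->
  exists eps, eps > 0 /\ forall i, (i < k)%nat -> forall b, Cdist_lt b Defs.C0 eps -> Q i b.
Proof.
  induction k; intros H.
  - exists 1; split; [lra|]. intros; lia.
  - destruct IHk as [e1 [He1 H1]]. { intros; apply H; lia. }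
    destruct (H k ltac:(lia)) as [e2 [He2 H2]].
    exists (Rmin e1 e2). split. { apply Rmin_pos; lra. }
    intros i Hi b Hb. destruct (Nat.eq_dec i k) as [->|Hne].
    + apply H2. apply (Cdist_mono _ _ _ _ Hb). split; [apply Rmin_pos; lra| apply Rmin_r].
    + apply H1; [lia|]. apply (Cdist_mono _ _ _ _ Hb). split; [apply Rmin_pos; lra| apply Rmin_l].
Qed.

Lemma cpt1 (F : (R -> Prop) -> Prop)
  (Fmono : forall A B : R -> Prop, (forall t, A t -> B t) -> F B -> F A)
  (Funion : forall A B : R -> Prop, F A -> F B -> F (fun t => A t \/ B t))
  (a b : R) : a <= b ->
  (forall t, a <= t <= b -> exists d, d > 0 /\ F (fun s => t - d < s < t + d)) ->
  F (fun s => a <= s <= b).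
Proof.
  intros Hab Hloc.
  set (E := fun x => a <= x <= b /\ F (fun s => a <= s <= x)).
  assert (Ea : E a).
  { split; [lra|]. destruct (Hloc a ltac:(lra)) as [d [Hd Fd]].
    refine (Fmono _ _ _ Fd). intros s Hs; simpl; lra. }
  assert (Hb : bound E). { exists b. intros x [Hx _]; lra. }
  destruct (completeness E Hb (ex_intro _ a Ea)) as [c [Hc1 Hc2]].
  assert (Hac : a <= c) by (apply Hc1; exact Ea).
  assert (Hcb : c <= b). { apply Hc2. intros x [Hx _]; lra. }
  destruct (Hloc c ltac:(lra)) as [d [Hd Fd]].
  assert (Hx : exists x, E x /\ c - d < x).
  { apply NNPP. intros Hn. assert (c <= c - d); [|lra].
    apply Hc2. intros x Ex. apply Rnot_lt_le. intros Hlt. apply Hn; eauto. }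
  destruct Hx as [x [[Hx1 Fx] Hxc]].
  assert (Hxc' : x <= c) by (apply Hc1; split; auto).
  set (m := Rmin b (c + d / 2)).
  assert (Fm : F (fun s => a <= s <= m)).
  { apply (Fmono _ (fun s => (a <= s <= x) \/ (c - d < s < c + d))).
    - intros s Hs. destruct (Rle_dec s x); [left; lra|right].
      assert (m <= c + d/2) by apply Rmin_r. lra.
    - apply Funion; auto. }
  assert (Hm : m = b).
  { unfold m. unfold Rmin. destruct (Rle_dec b (c + d/2)); auto.
    exfalso. assert (c + d/2 <= c); [|lra]. apply Hc1. unfold E. split; [lra|].
    unfold m, Rmin in Fm. destruct (Rle_dec b (c + d / 2)); [contradiction|exact Fm]. }
  rewrite <- Hm; exact Fm.
Qed.

Definition Gs {X : CTVS} (y z : X) (S : Cplx -> Prop) :=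
  exists W, is_open W /\ W z /\ forall g, S g -> ~ W (vscal g y).

Lemma Gmono {X : CTVS} (y z : X) (A B : Cplx -> Prop) :
  (forall g, A g -> B g) -> Gs y z B -> Gs y z A.
Proof. intros H [W [H1 [H2 H3]]]. exists W; split; auto. Qed.

Lemma Gunion {X : CTVS} (y z : X) (A B : Cplx -> Prop) :
  Gs y z A -> Gs y z B -> Gs y z (fun g => A g \/ B g).
Proof.
  intros [W [H1 [H2 H3]]] [V [G1 [G2 G3]]]. exists (fun x => W x /\ V x).
  split; [apply open_inter; auto|]. split; auto.
  intros g [Ag|Bg] [Wg Vg]; [eapply H3|eapply G3]; eauto.
Qed.

Lemma A1 {X : CTVS} (hX : Hausdorff X) (y z : X) :
  (forall b, z <> vscal b y) -> forall b, exists d, d > 0 /\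
  Gs y z (fun g => Cre b - d < Cre g < Cre b + d /\ Cim b - d < Cim g < Cim b + d).
Proof.
  intros Hz b. destruct (hX (vscal b y) z) as [P [Q [HP [HQ [Pb [Qz Hd]]]]]].
  { intros E; apply (Hz b); auto. }
  destruct (vscal_cont X b y P HP Pb) as [eps [U [Heps [HU [Uy Hc]]]]].
  exists (eps / 2). split; [lra|]. exists Q. split; auto. split; auto.
  intros g [[Hr1 Hr2] [Hi1 Hi2]] Qg. apply (Hd (vscal g y)); auto.
  apply Hc; auto. unfold Cdist_lt, Cnorm2, Cadd, Copp; simpl. nra.
Qed.

Lemma A3 {X : CTVS} (hX : Hausdorff X) (y z : X) :
  (forall b, z <> vscal b y) -> forall M, 0 <= M ->
  Gs y z (fun g => -M <= Cre g <= M /\ -M <= Cim g <= M).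
Proof.
  intros Hz M HM.
  set (Fo := fun A : R -> Prop => Gs y z (fun g => A (Cre g) /\ -M <= Cim g <= M)).
  change (Fo (fun s => -M <= s <= M)).
  apply cpt1; [ | | lra | ].
  - intros A B HAB HB. unfold Fo in *. eapply Gmono; [|exact HB]. simpl.
    intros g [Ag Hg]; auto.
  - intros A B HA HB. unfold Fo in *. eapply Gmono; [|exact (Gunion _ _ _ _ HA HB)].
    simpl. intros g [[Ag|Bg] Hg]; auto.
  - intros t Ht.
    set (Fi := fun B : R -> Prop => exists d, d > 0 /\
         Gs y z (fun g => t - d < Cre g < t + d /\ B (Cim g))).
    assert (HFi : Fi (fun s => -M <= s <= M)).
    { apply cpt1; [ | | lra | ].
      - intros A B HAB [d [Hd HB]]. exists d; split; auto. eapply Gmono; [|exact HB].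
        simpl. intros g [Ag Hg]; auto.
      - intros A B [d1 [Hd1 HA]] [d2 [Hd2 HB]]. exists (Rmin d1 d2).
        assert (Hm1 := Rmin_l d1 d2). assert (Hm2 := Rmin_r d1 d2).
        split; [apply Rmin_pos; lra|].
        eapply Gmono; [|exact (Gunion _ _ _ _ HA HB)]. simpl.
        intros g [Hg [Ag|Bg]]; [left|right]; split; auto; lra.
      - intros s Hs. destruct (A1 hX y z Hz (mkC t s)) as [d [Hd Hg]].
        exists d. split; auto. exists d. split; auto. }
    destruct HFi as [d [Hd HG]]. exists d. split; auto.
Qed.

Lemma A2 {X : CTVS} (hX : Hausdorff X) (y z : X) : y <> vzero ->
  exists M, M > 0 /\ Gs y z (fun g => M < Rabs (Cre g) \/ M < Rabs (Cim g)).
Proof.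
  intros Hy. destruct (hX vzero y) as [P [Q [HP [HQ [P0 [Qy Hd]]]]]].
  { intros E; apply Hy; auto. }
  assert (Pz : P (vscal Defs.C0 z)) by (rewrite vscal0; exact P0).
  destruct (vscal_cont X Defs.C0 z P HP Pz) as [eps [U [Heps [HU [Uz Hc]]]]].
  exists (1 / eps). split. { apply Rdiv_lt_0_compat; lra. }
  exists U. split; auto. split; auto.
  intros g Hg Ug.
  assert (Hn : 1 < Cnorm2 g * (eps * eps)).
  { assert (Hme : 1 / eps * eps = 1) by (field; lra).
    unfold Cnorm2.
    destruct Hg as [Hg|Hg].
    - assert (1/eps * (1/eps) < Cre g * Cre g).
      { destruct (Rcase_abs (Cre g)).
        + rewrite Rabs_left in Hg by lra. assert (0 < 1/eps) by (apply Rdiv_lt_0_compat; lra). nra.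
        + rewrite Rabs_right in Hg by lra. assert (0 < 1/eps) by (apply Rdiv_lt_0_compat; lra). nra. }
      assert (1/eps*(1/eps)*(eps*eps) < Cre g * Cre g * (eps*eps)) by (apply Rmult_lt_compat_r; nra).
      assert (1/eps*(1/eps)*(eps*eps) = 1) by (field; lra).
      assert (0 <= Cre g * Cre g * (eps*eps)) by (apply Rmult_le_pos; nra).
      assert (0 <= Cim g * Cim g * (eps*eps)) by (apply Rmult_le_pos; nra).
      nra.
    - assert (1/eps * (1/eps) < Cim g * Cim g).
      { destruct (Rcase_abs (Cim g)).
        + rewrite Rabs_left in Hg by lra. assert (0 < 1/eps) by (apply Rdiv_lt_0_compat; lra). nra.
        + rewrite Rabs_right in Hg by lra. assert (0 < 1/eps) by (apply Rdiv_lt_0_compat; lra). nra. }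
      assert (1/eps*(1/eps)*(eps*eps) < Cim g * Cim g * (eps*eps)) by (apply Rmult_lt_compat_r; nra).
      assert (1/eps*(1/eps)*(eps*eps) = 1) by (field; lra).
      assert (0 <= Cre g * Cre g * (eps*eps)) by (apply Rmult_le_pos; nra).
      assert (0 <= Cim g * Cim g * (eps*eps)) by (apply Rmult_le_pos; nra).
      nra. }
  assert (Hpos : 0 < Cnorm2 g) by (unfold Cnorm2 in *; nra).
  apply (Hd y); auto.
  replace y with (vscal (Cinv g) (vscal g y)).
  - apply Hc; auto. unfold Cdist_lt, Cinv, Cadd, Copp. simpl.
    unfold Cnorm2 at 1; simpl.
    replace ((Cre g / Cnorm2 g + - 0) * (Cre g / Cnorm2 g + - 0) +
             (- Cim g / Cnorm2 g + - 0) * (- Cim g / Cnorm2 g + - 0)) with (1 / Cnorm2 g).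
    + apply (Rmult_lt_reg_l (Cnorm2 g)); auto. field_simplify; lra.
    + unfold Cnorm2 in *; field; lra.
  - rewrite vscal_mul, Cinv_l by auto. apply vscal_1.
Qed.

Lemma absle x M : Rabs x <= M -> -M <= x <= M.
Proof. intros H. destruct (Rcase_abs x); [rewrite Rabs_left in H|rewrite Rabs_right in H]; lra. Qed.

Lemma line_closed {X : CTVS} (hX : Hausdorff X) (y z : X) : y <> vzero ->
  (forall b, z <> vscal b y) ->
  exists W, is_open W /\ W z /\ forall b, ~ W (vscal b y).
Proof.
  intros Hy Hz. destruct (A2 hX y z Hy) as [M [HM [W1 [O1 [W1z H1]]]]].
  destruct (A3 hX y z Hz M ltac:(lra)) as [W2 [O2 [W2z H2]]].
  exists (fun x => W1 x /\ W2 x). split; [apply open_inter; auto|]. split; auto.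
  intros b [Wb1 Wb2].
  destruct (Rle_dec (Rabs (Cre b)) M) as [Hr|Hr];
  destruct (Rle_dec (Rabs (Cim b)) M) as [Hi|Hi].
  - apply (H2 b); auto. split; apply absle; auto.
  - apply (H1 b); auto; right; lra.
  - apply (H1 b); auto; left; lra.
  - apply (H1 b); auto; left; lra.
Qed.

Lemma linc_cont {X : CTVS} c (f : nat -> X) k : forall W, is_open W -> W (lin_comb c f k) ->
  exists O : nat -> X -> Prop, (forall i, (i < k)%nat -> is_open (O i) /\ O i (f i)) /\
  forall g, (forall i, (i < k)%nat -> O i (g i)) -> W (lin_comb c g k).
Proof.
  induction k; intros W HW Wf; simpl in *.
  - exists (fun _ _ => True). split; [intros; lia|]. intros; exact Wf.
  - destruct (vadd_cont X _ _ W HW Wf) as [P [Q [HP [HQ [Pf [Qf Hc]]]]]].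
    destruct (vscal_cont X _ _ Q HQ Qf) as [eps [R [Heps [HR [Rf Hc2]]]]].
    destruct (IHk P HP Pf) as [O [HO1 HO2]].
    exists (fun i => if Nat.eqb i k then R else O i). split.
    + intros i Hi. destruct (Nat.eqb_spec i k) as [->|Hne]; auto. apply HO1; lia.
    + intros g Hg. apply Hc.
      * apply HO2. intros i Hi. specialize (Hg i ltac:(lia)).
        destruct (Nat.eqb_spec i k); [lia|auto].
      * apply Hc2; [apply Cdist_refl; auto|]. specialize (Hg k ltac:(lia)).
        rewrite Nat.eqb_refl in Hg; auto.
Qed.

Lemma shift_nbhd {X : CTVS} (p : X) (O : X -> Prop) : is_open O -> O p ->
  exists V, is_open V /\ V vzero /\ forall v, V v -> O (vadd v p).
Proof.
  intros HO Op. assert (O (vadd vzero p)) by (rewrite add0l; auto).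
  destruct (vadd_cont X _ _ O HO H) as [U [V [HU [HV [U0 [Vp Hc]]]]]].
  exists U. split; auto.
Qed.

Lemma dense_plus {X : CTVS} (G : (X -> X) -> Prop) (hd : SOT_dense G)
  (hsubG : forall T, G T -> is_bounded_op T) (T' : X -> X) (hT' : is_bounded_op T')
  k e (he : lin_indep e k) (A : X -> Prop) (HA : is_open A) (A0 : A vzero)
  (x0 : X) (W : X -> Prop) (HW : is_open W) (Wx : W (T' x0)) :
  exists S, G S /\ (forall i, (i < k)%nat -> A (vsub (S (e i)) (T' (e i)))) /\ W (S x0).
Proof.
  destruct (classic (exists c, x0 = lin_comb c e k)) as [[c Hc]|Hn].
  - rewrite Hc, op_lin_comb in Wx by auto.
    destruct (linc_cont c _ k W HW Wx) as [O [HO1 HO2]].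
    destruct (fin_nbhd vzero k (fun i z => O i (vadd z (T' (e i))))) as [V [HV [V0 HVc]]].
    { intros i Hi. destruct (HO1 i Hi). apply shift_nbhd; auto. }
    destruct (hd T' hT' k e he (fun v => A v /\ V v)) as [S [GS HS]].
    { exists (fun v => A v /\ V v). split; [apply open_inter; auto|]. split; auto. }
    exists S. split; auto. split.
    + intros i Hi; apply HS; auto.
    + rewrite Hc, op_lin_comb by auto. apply HO2. intros i Hi.
      rewrite <- (subK (S (e i)) (T' (e i))). apply HVc; auto. apply HS; auto.
  - set (e' := fun i => if Nat.eqb i k then x0 else e i).
    assert (he' : lin_indep e' (S k)).
    { intros c H.
      simpl in H. rewrite (lin_comb_ext c e' e) in H.
      2:{ intros i Hi. unfold e'. destruct (Nat.eqb_spec i k); [lia|auto]. }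
      unfold e' in H. rewrite Nat.eqb_refl in H.
      assert (Hck : c k = Defs.C0).
      { apply NNPP. intros Hck. apply Hn.
        exists (fun i => Cmul (Cmul (Cinv (c k)) (Copp Defs.C1)) (c i)).
        assert (Hp := Cnorm2_pos _ Hck).
        apply inv_unique in H.
        rewrite <- vscal_lin_comb, <- vscal_mul, <- vopp_m1, <- H, vscal_mul, Cinv_l by auto.
        symmetry; apply vscal_1. }
      rewrite Hck, vscal0, vadd_0 in H.
      intros i Hi. destruct (Nat.eq_dec i k) as [->|Hne]; auto. apply he; auto; lia. }
    destruct (shift_nbhd _ W HW Wx) as [V [HV [V0 HVc]]].
    destruct (hd T' hT' (S k) e' he' (fun v => A v /\ V v)) as [S [GS HS]].
    { exists (fun v => A v /\ V v). split; [apply open_inter; auto|]. split; auto. }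
    exists S. split; auto. split.
    + intros i Hi. destruct (HS i ltac:(lia)) as [HS1 _]. unfold e' in HS1.
      destruct (Nat.eqb_spec i k); [lia|auto].
    + destruct (HS k ltac:(lia)) as [_ HS2]. unfold e' in HS2. rewrite Nat.eqb_refl in HS2.
      rewrite <- (subK (S x0) (T' x0)). apply HVc; auto.
Qed.

Lemma add4 {X : CTVS} (a b c d : X) : vadd (vadd a b) (vadd c d) = vadd (vadd a c) (vadd b d).
Proof.
  rewrite <- !vadd_assoc. f_equal. rewrite !vadd_assoc. f_equal. apply vadd_comm.
Qed.

Lemma pert {X : CTVS} (T : X -> X) (hT : is_bounded_op T) (lam : Cplx) :
  is_bounded_op (fun v => vadd (T v) (vscal lam v)).
Proof.
  destruct hT as [Ha [Hs Hc]]. split; [|split].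
  - intros x y. rewrite Ha, vscal_addv. apply add4.
  - intros a x. rewrite Hs, vscal_addv, !vscal_mul. do 2 f_equal.
    apply Cext; simpl; ring.
  - intros W HW. apply open_local. intros x Wx.
    destruct (vadd_cont X _ _ W HW Wx) as [P [Q [HP [HQ [Px [Qx Hc1]]]]]].
    destruct (vscal_cont X _ _ Q HQ Qx) as [eps [R [Heps [HR [Rx Hc2]]]]].
    exists (fun u => P (T u) /\ R u). split; [apply open_inter; auto|]. split; auto.
    intros u [Pu Ru]. apply Hc1; auto. apply Hc2; auto. apply Cdist_refl; auto.
Qed.

Lemma constructT {X : CTVS} (T : X -> X) (hT : is_bounded_op T) (B : X -> Prop)
  (HB : is_open B) (B0 : B vzero) (x0 y0 : X)
  (Hind : lin_indep (fun i => match i with O => x0 | _ => y0 end) 2) k (e : nat -> X) :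
  exists T', is_bounded_op T' /\ (forall i, (i < k)%nat -> B (vsub (T' (e i)) (T (e i)))) /\
    forall b, T' x0 <> vscal b y0.
Proof.
  destruct (classic (exists b0, T x0 = vscal b0 y0)) as [[b0 Hb0]|Hn].
  2:{ exists T. split; auto. split.
      - intros; rewrite subrr; auto.
      - intros b E; apply Hn; eauto. }
  destruct (fin_eps k (fun i b => B (vscal b (e i)))) as [eps [Heps Hq]].
  { intros i Hi. assert (H : B (vscal Defs.C0 (e i))) by (rewrite vscal0; auto).
    destruct (vscal_cont X _ _ B HB H) as [eps [U [He [HU [Ue Hc]]]]].
    exists eps; split; auto. }
  set (lam := mkC (eps/2) 0).
  exists (fun v => vadd (T v) (vscal lam v)). split; [apply pert; auto|]. split.
  - intros i Hi. rewrite addK'. apply Hq; auto. unfold Cdist_lt, Cnorm2, lam; simpl. nra.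
  - intros g Hg. rewrite Hb0 in Hg.
    assert (Hc := Hind (fun i => match i with O => lam | _ => Cadd b0 (Copp g) end)).
    assert (Hl : lam = Defs.C0).
    { apply (Hc ltac:(simpl; rewrite add0l, vscal_addC, vscal_opp, vadd_assoc,
              (vadd_comm _ (vscal lam x0) (vscal b0 y0)), Hg, vadd_opp; reflexivity) 0%nat).
      lia. }
    apply (f_equal Cre) in Hl. unfold lam in Hl; simpl in Hl. lra.
Qed.

Theorem corollary3p13 (X : CTVS) (hX : Hausdorff X) (hdim : dim_gt1 X)
  (Gamma : (X -> X) -> Prop)
  (hsub : forall T, Gamma T -> is_bounded_op T)
  (hdense : SOT_dense Gamma) :
  exists Gamma1 : (X -> X) -> Prop,
    (forall T, Gamma1 T -> Gamma T) /\ SOT_dense Gamma1 /\ ~ strictly_transitive Gamma1.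
Proof.
  destruct hdim as [x0 [y0 Hind]].
  assert (C10 : Defs.C1 <> Defs.C0).
  { intros H. apply (f_equal Cre) in H. simpl in H. lra. }
  assert (hx0 : x0 <> vzero).
  { intros E. apply C10.
    apply (Hind (fun i => match i with O => Defs.C1 | _ => Defs.C0 end) ltac:(
      simpl; rewrite E, vscal_zero, vscal0, add0l, vadd_0; reflexivity) 0%nat). lia. }
  assert (hy0 : y0 <> vzero).
  { intros E. apply C10.
    apply (Hind (fun i => match i with O => Defs.C0 | _ => Defs.C1 end) ltac:(
      simpl; rewrite E, vscal_zero, vscal0, add0l, vadd_0; reflexivity) 1%nat). lia. }
  exists (fun S => Gamma S /\ forall b, S x0 <> vscal b y0).
  split; [intros T [H _]; exact H|]. split.
  - intros T hT k e he U [U0 [HU0 [U00 HUU]]].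
    assert (H00 : U0 (vadd vzero vzero)) by (rewrite add0l; auto).
    destruct (vadd_cont X _ _ U0 HU0 H00) as [A [B [HA [HB [A0 [B0 HAB]]]]]].
    destruct (constructT T hT B HB B0 x0 y0 Hind k e) as [T' [hT' [HT'1 HT'2]]].
    destruct (line_closed hX y0 (T' x0) hy0 HT'2) as [W [HW [Wx HWn]]].
    destruct (dense_plus Gamma hdense hsub T' hT' k e he A HA A0 x0 W HW Wx)
      as [S [GS [HS1 HS2]]].
    exists S. split.
    + split; auto. intros b E. apply (HWn b). rewrite <- E; auto.
    + intros i Hi. apply HUU. rewrite (sub_split _ _ (T' (e i))). apply HAB; auto.
  - intros HST. destruct (HST x0 y0 hx0 hy0) as [a [S [[GS HS] Ha]]].
    assert (Hna : a <> Defs.C0).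
    { intros E. apply hy0. rewrite <- Ha, E. apply vscal0. }
    apply (HS (Cinv a)). rewrite <- Ha, vscal_mul, Cinv_l by (apply Cnorm2_pos; auto).
    symmetry; apply vscal_1.
Qed.
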